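(* Let $p>1$ be an integer. Then the point spectrum of $U_p$ on $\mathcal{R}$, i.e. the set of $\lambda\in\mathbb{R}$ for which there is a nonzero $f\in\mathcal{R}$ with $U_pf=\lambda f$, is \[\operatorname{spec}(U_p)=\{\pm p^{k}\,:\,k\in\mathbb{N}\}\cup\{0\},\] where $\mathbb{N}=\{0,1,2,\dots\}$.
   Context: $\mathcal{R}$ denotes the real vector space of rational functions $f(x)=A(x)/B(x)$ with $A,B\in\mathbb{R}[x]$, $B(0)\neq 0$ and $\deg A<\deg B$. For $f\in\mathcal{R}$ with Taylor expansion $f(x)=\sum_{n\ge0}a_nx^n$ at $0$ and a positive integer $p$, the Hecke operator $U_p$ is defined by $U_pf(x)=\sum_{n\ge 0}a_{pn}x^n$; this is again an element of $\mathcal{R}$. *)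

(* Defs.v *)
From HB Require Import structures.
From mathcomp Require Import all_boot all_order all_algebra.
From mathcomp Require Import reals.
Set Implicit Arguments. Unset Strict Implicit. Unset Printing Implicit Defensive.
Import Order.TTheory GRing.Theory Num.Theory.
Local Open Scope ring_scope.

(* An element f of the space R of the paper is represented by its Taylor
   coefficient sequence a : nat -> R at 0 (a rational function regular at 0
   is determined by its Taylor expansion).  The Taylor expansion of A/B
   (with B(0) <> 0) is the unique power series a with B * a = A, i.e. *)
Definition taylor_of {R : realType} (A B : {poly R}) (a : nat -> R) : Prop :=
  forall n : nat, \sum_(i < n.+1) B`_i * a (n - i)%N = A`_n.

(* a is the Taylor sequence of some A/B with B(0) <> 0 and deg A < deg B
   (size = degree + 1; the zero polynomial A = 0 has degree -oo). *)
Definition in_calR {R : realType} (a : nat -> R) : Prop :=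
  exists A B : {poly R}, B.[0] != 0 /\ (size A < size B)%N /\ taylor_of A B a.

Definition U_op {R : realType} (p : nat) (a : nat -> R) : nat -> R :=
  fun n => a (p * n)%N.

Definition point_spec {R : realType} (p : nat) (lam : R) : Prop :=
  exists a : nat -> R, in_calR a /\ (exists n, a n != 0) /\
    (forall n, U_op p a n = lam * a n).

(* Main.v *)
Require Import Defs.
From HB Require Import structures.
From mathcomp Require Import all_boot all_order all_algebra.
From mathcomp Require Import reals.
From mathcomp Require Import zify ring.
From mathcomp.real_closed Require Import complex.
From Stdlib Require Import Classical_Prop FunctionalExtensionality.
Import Order.TTheory GRing.Theory Num.Theory.
Local Open Scope ring_scope.

Section Act.
Variable F : fieldType.
Implicit Types (c d : {poly F}) (b f g : nat -> F).

Definition act c b : nat -> F := fun n => \sum_(j < size c) c`_j * b (n + j)%N.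

Lemma sum_trunc (G : nat -> F) m N : (m <= N)%N -> (forall i, (m <= i)%N -> G i = 0) ->
  \sum_(i < N) G i = \sum_(i < m) G i.
Proof.
move=> hmN hG; rewrite (big_ord_widen N G hmN) [RHS]big_mkcond; apply: eq_bigr => i _ /=.
by case: ifP => // /negbT; rewrite -leqNgt => /hG ->.
Qed.

Lemma actE c b n N : (size c <= N)%N -> act c b n = \sum_(j < N) c`_j * b (n + j)%N.
Proof.
move=> h; rewrite /act (@sum_trunc (fun j => c`_j * b (n + j)%N) _ _ h) //.
by move=> i hi; rewrite nth_default // mul0r.
Qed.

Lemma act0 b n : act 0 b n = 0.
Proof. by rewrite /act size_poly0 big_ord0. Qed.

Lemma actD c d b n : act (c + d) b n = act c b n + act d b n.
Proof.
pose N := maxn (size c) (size d).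
rewrite (actE _ _ _ _ (size_polyD c d)) (@actE c b n N) ?leq_maxl //.
rewrite (@actE d b n N) ?leq_maxr // -big_split /=.
by apply: eq_bigr => i _; rewrite coefD mulrDl.
Qed.

Lemma actC k b n : act k%:P b n = k * b n.
Proof.
rewrite (actE _ _ _ _ (size_polyC_leq1 k)) big_ord1 coefC /= addn0 //.
Qed.

Lemma actZ k c b n : act (k%:P * c) b n = k * act c b n.
Proof.
have h : (size (k%:P * c)%R <= size c)%N by rewrite mul_polyC size_scale_leq.
rewrite (actE _ _ _ _ h) /act mulr_sumr; apply: eq_bigr => i _.
by rewrite coefCM mulrA.
Qed.

Lemma actMX c b n : act (c * 'X) b n = act c b n.+1.
Proof.
have h : (size (c * 'X)%R <= (size c).+1)%N.
  by have [->|cn0] := eqVneq c 0; rewrite ?mul0r ?size_poly0 // size_mulX.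
rewrite (actE _ _ _ _ h) big_ord_recl coefMX /= mul0r add0r /act.
by apply: eq_bigr => i _; rewrite coefMX /= addnS addSn.
Qed.

Lemma act_ext c b b' n : (forall m, b m = b' m) -> act c b n = act c b' n.
Proof. by move=> h; apply: eq_bigr => i _; rewrite h. Qed.

Lemma actM c d b n : act (c * d) b n = act c (act d b) n.
Proof.
elim/poly_ind: c n => [|q k IH] n; first by rewrite mul0r !act0.
rewrite mulrDl mulrAC actD actMX IH actZ actD actMX actC.
by [].
Qed.

Lemma actXn k b n : act ('X^k) b n = b (n + k)%N.
Proof.
elim: k n => [|k IH] n; first by rewrite expr0 -polyC1 actC mul1r addn0.
by rewrite exprSr actMX IH addSnnS.
Qed.

Lemma act_XnsubC k w b n : act ('X^k - w%:P) b n = b (n + k)%N - w * b n.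
Proof. by rewrite actD actXn -polyCN actC mulNr. Qed.

Lemma act_scal c k b n : act c (fun m => k * b m) n = k * act c b n.
Proof. by rewrite /act mulr_sumr; apply: eq_bigr => i _; rewrite mulrCA. Qed.

Lemma act_zero c n : act c (fun _ => 0) n = 0.
Proof. by rewrite /act big1 // => i _; rewrite mulr0. Qed.


Lemma actN c b n : act (- c) b n = - act c b n.
Proof. by rewrite -mulN1r -polyCN actZ mulN1r. Qed.

Definition ann c b := forall n, act c b n = 0.

Lemma ann_mul c d b : ann d b -> ann (c * d) b.
Proof. by move=> h n; rewrite actM (act_ext _ _ (fun _ => 0) _ h) act_zero. Qed.

Lemma ann_dvd (m g : {poly F}) b : ann m b -> (m %| g)%R -> ann g b.
Proof. by move=> h /divpK <-; apply: ann_mul. Qed.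

Lemma minpoly_ex c b : c != 0 -> ann c b ->
  exists m : {poly F}, [/\ m != 0, ann m b & forall g : {poly F}, ann g b -> (m %| g)%R].
Proof.
suff: forall n (g : {poly F}), (size g <= n)%N -> g != 0 -> ann g b ->
  exists m : {poly F}, [/\ m != 0, ann m b & forall g : {poly F}, ann g b -> (m %| g)%R].
  by move=> /(_ (size c) c (leqnn _)).
elim=> [|n IH] g hs gn0 hg.
  by move: gn0; rewrite -size_poly_eq0; move: hs; rewrite leqn0 => ->.
have [[h [hh ndv]]|nex] := classic (exists h, ann h b /\ ~~ (g %| h)%R).
  have rn0 : h %% g != 0 by apply: contra ndv => /eqP h0; apply/modp_eq0P.
  have hr : ann (h %% g) b.
    move=> k; have -> : h %% g = h - h %/ g * g by rewrite {2}(divp_eq h g) addrAC subrr add0r.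
    by rewrite actD actN hh (ann_mul (h %/ g) _ _ hg) subrr.
  apply: (IH (h %% g)) => //.
  by rewrite -ltnS; apply: leq_trans hs; rewrite ltn_modp.
exists g; split=> // k hk; apply/negPn/negP => nd; apply: nex; exists k; split=> //.
Qed.

Definition dlt s f : nat -> F := fun n => f (n + s)%N - f n.

Lemma act_Xnsub1 M f n : act ('X^M - 1) f n = f (n + M)%N - f n.
Proof. by rewrite -[X in 'X^M - X]polyC1 act_XnsubC mul1r. Qed.

Lemma act_pow_dlt M D b n : act (('X^M - 1)^+D) b n = iter D (dlt M) b n.
Proof.
elim: D n => [|D IH] n; first by rewrite expr0 -polyC1 actC mul1r.
by rewrite exprS actM act_Xnsub1 !IH.
Qed.

Definition smp r s f : nat -> F := fun t => f (r + s * t)%N.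

Lemma dlt_smp r s f : dlt 1 (smp r s f) = smp r s (dlt s f).
Proof.
apply: functional_extensionality => t; rewrite /dlt /smp.
by congr (f _ - _); rewrite addn1 mulnS; ring.
Qed.

Lemma iter_dlt_smp k r s f : iter k (dlt 1) (smp r s f) = smp r s (iter k (dlt s) f).
Proof. by elim: k => [|k IH] //=; rewrite IH dlt_smp. Qed.

Definition Sq q f : nat -> F := fun n => \sum_(i < q) f (n + i)%N.

Lemma dlt_S q f : dlt q f = Sq q (dlt 1 f).
Proof.
apply: functional_extensionality => n; rewrite /dlt /Sq.
rewrite -(big_mkord xpredT (fun i => f (n + i + 1)%N - f (n + i)%N)).
under eq_bigr => i _ do rewrite addn1 -addnS.
by rewrite (telescope_sumr (fun i => f (n + i)%N)) // addn0.
Qed.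

Lemma dlt1_S q f : dlt 1 (Sq q f) = Sq q (dlt 1 f).
Proof.
apply: functional_extensionality => n; rewrite /dlt /Sq -sumrB.
by apply: eq_bigr => i _; rewrite addnAC.
Qed.

Lemma iter_dlt1_S k q f : dlt 1 (iter k (Sq q) f) = iter k (Sq q) (dlt 1 f).
Proof. by elim: k => [|k IH] //=; rewrite dlt1_S IH. Qed.

Lemma iter_dltq k q f : iter k (dlt q) f = iter k (Sq q) (iter k (dlt 1) f).
Proof.
elim: k => [|k IH] //=; rewrite IH dlt_S iter_dlt1_S.
by [].
Qed.

Lemma iter_S_const k q (c : F) : iter k (Sq q) (fun _ => c) = fun _ => (q%:R)^+k * c.
Proof.
elim: k => [|k IH] /=; first by apply: functional_extensionality => n; rewrite mul1r.
rewrite IH; apply: functional_extensionality => n; rewrite /Sq sumr_const card_ord.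
by rewrite exprS -mulrA mulr_natl.
Qed.

Lemma iter_dlt_scal k s (L : F) f :
  iter k (dlt s) (fun n => L * f n) = fun n => L * iter k (dlt s) f n.
Proof.
elim: k => [|k IH] //=; rewrite IH; apply: functional_extensionality => n.
by rewrite /dlt mulrBr.
Qed.

Lemma dlt_const f : dlt 1 f = (fun _ => 0) -> forall t, f t = f 0%N.
Proof.
move=> h; elim=> [|t IH] //; rewrite -IH.
have := congr1 (fun g => g t) h; rewrite /dlt addn1 => /eqP; rewrite subr_eq0.
by move/eqP.
Qed.

Lemma top_diff D f : iter D (dlt 1) f = (fun _ => 0) -> (exists t, f t != 0) ->
  exists k, (exists t, iter k (dlt 1) f t != 0) /\ dlt 1 (iter k (dlt 1) f) = (fun _ => 0).
Proof.
elim: D => [|D IH] /=.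
  by move=> -> [t]; rewrite eqxx.
move=> h nz; have [z|nz'] := classic (iter D (dlt 1) f = (fun _ => 0)).
  exact: IH.
exists D; split=> //; apply: NNPP => nex; apply: nz'.
apply: functional_extensionality => t; apply/eqP; apply/negPn/negP => ne.
by apply: nex; exists t.
Qed.

Lemma stepC q s (L : F) f D : (0 < q)%N -> iter D (dlt 1) f = (fun _ => 0) ->
  (exists t, f t != 0) -> smp s q f = (fun t => L * f t) -> exists k, L = (q%:R)^+k.
Proof.
move=> q0 hD nz hs.
have [k [[t0 ht0] hk]] := top_diff _ _ hD nz.
set d := iter k (dlt 1) f in ht0 hk.
have dc := dlt_const _ hk.
have d0 : d 0%N != 0 by rewrite -(dc t0).
have e1 : iter k (dlt 1) (smp s q f) = fun _ => (q%:R)^+k * d 0%N.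
  rewrite iter_dlt_smp iter_dltq -/d.
  have -> : d = (fun _ => d 0%N) by apply: functional_extensionality.
  by rewrite iter_S_const.
have e2 : iter k (dlt 1) (smp s q f) = fun n => L * d n.
  by rewrite hs iter_dlt_scal.
exists k; have := congr1 (fun g => g 0%N) (etrans (esym e1) e2) => /= /eqP.
by rewrite (inj_eq (mulIf d0)) => /eqP.
Qed.

Lemma stepB M D b (L : F) : (0 < M)%N -> ann (('X^M - 1)^+D) b ->
  (forall n, b ((M + 1) * n)%N = L * b n) -> (exists n, b n != 0) ->
  exists k, L = ((M + 1)%N%:R)^+k.
Proof.
move=> M0 hann heig [n0 hn0].
pose r := (n0 %% M)%N.
apply: (@stepC (M + 1)%N r L (smp r M b) D); first by rewrite addn1.
- rewrite iter_dlt_smp; apply: functional_extensionality => t.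
  by rewrite /smp -act_pow_dlt hann.
- exists (n0 %/ M)%N; rewrite /smp /r addnC mulnC -divn_eq //.
- apply: functional_extensionality => t; rewrite /smp -heig.
  congr b; rewrite !mulnDl !mulnDr !mul1n; ring.
Qed.

End Act.

Arguments act {F}.
Arguments sum_trunc {F}.
Arguments actE {F}.
Arguments act0 {F}.
Arguments actD {F}.
Arguments actC {F}.
Arguments actZ {F}.
Arguments actMX {F}.
Arguments act_ext {F}.
Arguments actM {F}.
Arguments actXn {F}.
Arguments act_XnsubC {F}.
Arguments act_scal {F}.
Arguments act_zero {F}.
Arguments actN {F}.
Arguments ann {F}.
Arguments ann_mul {F}.
Arguments ann_dvd {F}.
Arguments minpoly_ex {F}.
Arguments dlt {F}.
Arguments act_Xnsub1 {F}.
Arguments act_pow_dlt {F}.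
Arguments smp {F}.
Arguments dlt_smp {F}.
Arguments iter_dlt_smp {F}.
Arguments Sq {F}.
Arguments dlt_S {F}.
Arguments dlt1_S {F}.
Arguments iter_dlt1_S {F}.
Arguments iter_dltq {F}.
Arguments iter_S_const {F}.
Arguments iter_dlt_scal {F}.
Arguments dlt_const {F}.
Arguments top_diff {F}.
Arguments stepC {F}.
Arguments stepB {F}.
Lemma iter_mult (T : Type) (f : T -> T) P z : iter P f z = z -> forall k, iter (P * k) f z = z.
Proof. move=> h; elim=> [|k IH]; first by rewrite muln0. by rewrite mulnS iterD IH h. Qed.

Lemma perm_finite (T : eqType) (f : T -> T) (s : seq T) :
  (forall z, z \in s -> exists2 y, y \in s & f y = z) ->
  exists L, (0 < L)%N /\ forall z, z \in s -> iter L f z = z.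
Proof.
move=> hs.
pose pre z := nth z s (find (fun y => f y == z) s).
have hpre : forall z, z \in s -> pre z \in s /\ f (pre z) = z.
  move=> z zs; have hh : has (fun y => f y == z) s.
    by have [y ys fy] := hs z zs; apply/hasP; exists y => //; rewrite fy.
  split; first by rewrite /pre mem_nth // -has_find.
  by apply/eqP; apply: (nth_find z hh).
have hit : forall z i, z \in s -> iter i pre z \in s.
  by move=> z; elim=> [|i IH] //= zs; exact: (hpre _ (IH zs)).1.
have hback : forall z i, z \in s -> iter i f (iter i pre z) = z.
  move=> z; elim=> [|i IH] //= zs.
  by rewrite -iterS iterSr (hpre _ (hit z i zs)).2 IH.
have per : forall z, z \in s -> exists P, (0 < P)%N /\ iter P f z = z.
  move=> z zs; pose w := [seq iter i pre z | i <- iota 0 (size s).+1].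
  have : ~~ uniq w.
    apply/negP => uw; have := uniq_leq_size uw.
    have sub : {subset w <= s} by move=> y /mapP [i _ ->]; exact: hit.
    by move=> /(_ s sub); rewrite size_map size_iota ltnn.
  case/(uniqPn z) => i [j [ij jw]].
  rewrite size_map size_iota in jw.
  rewrite !(nth_map 0%N) ?size_iota ?(ltn_trans ij) // !nth_iota ?(ltn_trans ij) // !add0n => eij.
  exists (j - i)%N; split; first by rewrite subn_gt0.
  rewrite -{1}(hback z i zs) -iterD subnK ?(ltnW ij) // eij.
  exact: hback.
have : {subset s <= s} by [].
elim: {-2}s => [|y t IH] sub.
  by exists 1%N.
have [L [L0 hL]] : exists L, (0 < L)%N /\ forall z, z \in t -> iter L f z = z.
  by apply: IH => z zt; apply: sub; rewrite inE zt orbT.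
have [P [P0 hP]] := per y (sub y (mem_head _ _)).
exists (P * L)%N; split; first by rewrite muln_gt0 P0.
move=> z; rewrite inE => /orP [/eqP ->|zt]; first exact: iter_mult.
by rewrite mulnC; apply: iter_mult; apply: hL.
Qed.

Lemma act_XsubC (F : fieldType) (w : F) f n : act ('X - w%:P) f n = f n.+1 - w * f n.
Proof. by have := act_XnsubC 1 w f n; rewrite expr1 addn1. Qed.

Lemma act1 (F : fieldType) (f : nat -> F) n : act 1 f n = f n.
Proof. by rewrite -polyC1 actC mul1r. Qed.

Lemma act_intertwine (F : fieldType) p (s : seq F) (b : nat -> F) n :
  act (\prod_(w <- s) ('X - w%:P)) (fun m => b (p * m)%N) n =
  act (\prod_(w <- s) ('X^p - w%:P)) b (p * n)%N.
Proof.
elim: s n => [|w s IH] n; first by rewrite !big_nil !act1.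
rewrite !big_cons !actM act_XsubC act_XnsubC !IH.
by rewrite mulnS addnC.
Qed.

Lemma iter_pow (F : fieldType) (p L : nat) (z : F) : iter L (fun w => w ^+ p) z = z ^+ (p ^ L).
Proof.
elim: L => [|L IH]; first by rewrite expn0 expr1.
by rewrite iterS IH -exprM expnSr.
Qed.

Lemma prod_dvd_G (F : fieldType) p (rs : seq F) :
  (\prod_(z <- rs) ('X - z%:P) %| \prod_(z <- rs) ('X^p - (z ^+ p)%:P))%R.
Proof.
elim: rs => [|z t IH]; first by rewrite !big_nil.
rewrite !big_cons; apply: dvdp_mul => //.
by rewrite dvdp_XsubCl /root !hornerE subrr.
Qed.

Lemma prod_dvd_h (F : fieldType) M (rs : seq F) : (forall z, z \in rs -> z ^+ M = 1) ->
  (\prod_(z <- rs) ('X - z%:P) %| ('X^M - 1) ^+ (size rs))%R.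
Proof.
elim: rs => [|z t IH] hzt; first by rewrite !big_nil expr0.
rewrite big_cons /= exprS; apply: dvdp_mul.
  by rewrite dvdp_XsubCl /root !hornerE hzt ?mem_head // subrr.
by apply: IH => y yt; apply: hzt; rewrite inE yt orbT.
Qed.

Lemma hard_closed (C : closedFieldType) (p : nat) (b : nat -> C) (Lm : C) (c : {poly C}) :
  (1 < p)%N -> c.[0] != 0 -> ann c b -> (exists n, b n != 0) -> Lm != 0 ->
  (forall n, b (p * n)%N = Lm * b n) ->
  exists L k, (0 < L)%N /\ Lm ^+ L = ((p ^ L)%N%:R) ^+ k.
Proof.
move=> hp c0 hc nz L0 heig.
have cn0 : c != 0 by apply: contra c0 => /eqP ->; rewrite horner0.
have [m [mn0 hm mmin]] := minpoly_ex _ _ cn0 hc.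
have m0 : m.[0] != 0.
  apply: contra c0 => /eqP mz; have := divpK (mmin c hc).
  by move=> <-; rewrite hornerM mz mulr0.
have [rs hrs] := closed_field_poly_normal m.
have lm0 : lead_coef m != 0 by rewrite lead_coef_eq0.
set P := \prod_(z <- rs) ('X - z%:P) in hrs.
have rootm : forall z, z \in rs -> m.[z] = 0.
  move=> z zs; rewrite hrs hornerZ /P horner_prod.
  apply/eqP; rewrite mulf_eq0; apply/orP; right; rewrite prodf_seq_eq0.
  by apply/hasP; exists z => //; rewrite hornerXsubC subrr eqxx.
have nz0 : forall z, z \in rs -> z != 0.
  by move=> z zs; apply/negP => /eqP z0; move: (rootm z zs); rewrite z0 => h; rewrite h eqxx in m0.
pose G := \prod_(z <- rs) ('X^p - (z ^+ p)%:P).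
pose g := \prod_(z <- rs) ('X - (z ^+ p)%:P).
have PG : (P %| G)%R by apply: prod_dvd_G.
have annG : ann G b by apply: (ann_dvd _ _ _ hm); rewrite hrs dvdpZl.
have anng : ann g b.
  move=> n; have := act_intertwine _ p [seq z ^+ p | z <- rs] b n.
  rewrite !big_map -/g -/G annG (act_ext _ _ (fun m => Lm * b m) _ heig) act_scal.
  by move/eqP; rewrite mulf_eq0 (negPf L0) /= => /eqP.
have mg := mmin g anng.
have surj : forall z, z \in rs -> exists2 y, y \in rs & y ^+ p = z.
  move=> z zs; have : g.[z] = 0 by rewrite -(divpK mg) hornerM rootm // mulr0.
  rewrite /g horner_prod => /eqP; rewrite prodf_seq_eq0 => /hasP [y ys].
  by rewrite hornerXsubC subr_eq0 => /eqP ->; exists y.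
have [L [Lpos hL]] := perm_finite _ _ _ surj.
pose q := (p ^ L)%N.
have q2 : (1 < q)%N by apply: leq_ltn_trans (ltn_expl L hp); rewrite Lpos.
pose M := (q - 1)%N.
have M0 : (0 < M)%N by rewrite /M subn_gt0.
have hz : forall z, z \in rs -> z ^+ M = 1.
  move=> z zs; have := hL z zs; rewrite iter_pow -/q.
  have -> : q = M.+1 by rewrite /M subn1 prednK // ltnW.
  by rewrite exprSr => h; apply: (mulIf (nz0 z zs)); rewrite h mul1r.
have Ph : (P %| ('X^M - 1) ^+ (size rs))%R by apply: prod_dvd_h.
have annh : ann (('X^M - 1) ^+ (size rs)) b by apply: (ann_dvd _ _ _ hm); rewrite hrs dvdpZl.
have heigL : forall j n, b (p ^ j * n)%N = Lm ^+ j * b n.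
  elim=> [|j IH] n; first by rewrite expn0 mul1n expr0 mul1r.
  by rewrite expnSr -mulnA IH heig exprSr mulrA.
have Mq : (M + 1)%N = q by rewrite /M subnK // ltnW.
have hq : forall n, b ((M + 1) * n)%N = Lm ^+ L * b n by move=> n; rewrite Mq heigL.
have [k hk] := stepB _ _ _ _ M0 annh hq nz.
by exists L, k; split=> //; rewrite hk Mq.
Qed.

Section Real.
Variable R : realType.

Lemma rev_sum (G : nat -> R) d :
  \sum_(i < d.+1) G i = \sum_(j < d.+1) G (d - j)%N.
Proof.
rewrite (reindex_inj rev_ord_inj) /=; apply: eq_bigr => j _.
by rewrite subSS.
Qed.

Lemma rec_of_calR (a : nat -> R) : in_calR a -> exists c : {poly R}, c.[0] != 0 /\ ann c a.
Proof.
move=> [A [B [hB0 [hs ht]]]].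
have Bn0 : B != 0 by apply: contra hB0 => /eqP ->; rewrite horner0.
pose d := (size B).-1.
have sB : size B = d.+1 by rewrite /d prednK // size_poly_gt0.
exists (\poly_(j < d.+1) B`_(d - j)); split.
  rewrite horner_coef0 coef_poly /= subn0.
  by have := Bn0; rewrite -lead_coef_eq0 lead_coefE.
move=> n; rewrite (actE _ _ _ (d.+1) (size_poly _ _)).
have := ht (n + d)%N; rewrite nth_default; last by apply: leq_trans (leq_addl n d); rewrite -ltnS -sB.
rewrite (@sum_trunc _ (fun i => B`_i * a (n + d - i)%N) d.+1) ?ltnS ?leq_addl //; last first.
  by move=> i hi; rewrite nth_default ?mul0r // sB.
rewrite (rev_sum (fun i => B`_i * a (n + d - i)%N)) => h; apply: etrans h; apply: eq_bigr => j _.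
rewrite coef_poly ltn_ord; congr (_ * a _).
have := ltn_ord j; lia.
Qed.

Lemma calR_of_rec (a : nat -> R) (c : {poly R}) : c.[0] != 0 -> ann c a -> in_calR a.
Proof.
move=> c0 hc.
have cn0 : c != 0 by apply: contra c0 => /eqP ->; rewrite horner0.
pose d := (size c).-1.
have sc : size c = d.+1 by rewrite /d prednK // size_poly_gt0.
pose B := \poly_(i < d.+1) c`_(d - i).
have sB : size B = d.+1 by rewrite size_poly_eq //= subnn -horner_coef0.
exists (\poly_(i < d) (\sum_(j < i.+1) B`_j * a (i - j)%N)), B; split; last split.
- rewrite horner_coef0 coef_poly /= subn0.
  by have := cn0; rewrite -lead_coef_eq0 lead_coefE sc.
- by rewrite sB ltnS size_poly.
move=> n; rewrite coef_poly; case: ltnP => hn //.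
rewrite (@sum_trunc _ (fun i => B`_i * a (n - i)%N) d.+1) ?ltnS //; last first.
  by move=> i hi; rewrite nth_default ?mul0r // sB.
rewrite (rev_sum (fun i => B`_i * a (n - i)%N)).
apply: (etrans _ (hc (n - d)%N)); rewrite (actE _ _ _ d.+1) ?sc //.
apply: eq_bigr => j _; rewrite /B coef_poly; have jd := ltn_ord j.
rewrite (_ : (d - j < d.+1)%N = true); last by apply/idP; lia.
congr (c`_ _ * a _); lia.
Qed.


Lemma dlt_sum s j (w : 'I_j -> R) (g : 'I_j -> nat -> R) :
  dlt s (fun n => \sum_(i < j) w i * g i n) = fun n => \sum_(i < j) w i * dlt s (g i) n.
Proof.
apply: functional_extensionality => n; rewrite /dlt -sumrB.
by apply: eq_bigr => i _; rewrite mulrBr.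
Qed.

Lemma iter_dlt_sum D s j (w : 'I_j -> R) (g : 'I_j -> nat -> R) :
  iter D (dlt s) (fun n => \sum_(i < j) w i * g i n) =
  fun n => \sum_(i < j) w i * iter D (dlt s) (g i) n.
Proof. by elim: D => [|D IH] //=; rewrite IH dlt_sum. Qed.

Lemma iter_dlt_poly (chi : nat -> R) m : (forall n, chi (n + m)%N = chi n) ->
  forall D j, (j < D)%N -> iter D (dlt m) (fun n => chi n * n%:R ^+ j) = fun _ => 0.
Proof.
move=> hper; elim=> [|D IH] // j hj.
rewrite iterSr.
have -> : dlt m (fun n => chi n * n%:R ^+ j) =
  fun n => \sum_(i < j) (m%:R ^+ (j - i) *+ 'C(j, i)) * (chi n * n%:R ^+ i).
  apply: functional_extensionality => n; rewrite /dlt hper -mulrBr natrD (addrC n%:R) exprDn.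
  rewrite big_ord_recr /= subnn expr0 mul1r binn mulr1n addrK mulr_sumr.
  by apply: eq_bigr => i _; rewrite mulrnAl mulrnAr mulrCA -mulrnAr.
rewrite iter_dlt_sum; apply: functional_extensionality => n.
rewrite big1 // => i _; have hi : (i < D)%N by apply: leq_trans (ltn_ord i) _.
by rewrite (IH _ hi) mulr0.
Qed.

Lemma calR_chi (chi : nat -> R) m k : (0 < m)%N -> (forall n, chi (n + m)%N = chi n) ->
  in_calR (fun n => chi n * n%:R ^+ k).
Proof.
move=> m0 hper; apply: (@calR_of_rec _ (('X^m - 1) ^+ k.+1)).
  by rewrite horner_exp !hornerE expr0n (gtn_eqF m0) sub0r expf_neq0 // oppr_eq0 oner_eq0.
by move=> n; rewrite act_pow_dlt (iter_dlt_poly _ _ hper _ _ (ltnSn k)).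
Qed.

Lemma act_map (f : {rmorphism R -> R[i]}) (c : {poly R}) (a : nat -> R) n :
  act (map_poly f c) (fun m => f (a m)) n = f (act c a n).
Proof.
rewrite /act size_map_poly rmorph_sum; apply: eq_bigr => i _.
by rewrite coef_map rmorphM.
Qed.

End Real.

Arguments rev_sum {R}.
Arguments rec_of_calR {R}.
Arguments calR_of_rec {R}.
Arguments dlt_sum {R}.
Arguments iter_dlt_sum {R}.
Arguments iter_dlt_poly {R}.
Arguments calR_chi {R}.
Arguments act_map {R}.

Definition chiN (R : realType) (p n : nat) : R :=
  if (n %% p.+1 == 1)%N then 1 else if (n %% p.+1 == p)%N then -1 else 0.

Lemma chiN_mul (R : realType) p n : (1 < p)%N -> chiN R p (p * n) = - chiN R p n.
Proof.
move=> hp; rewrite /chiN.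
set r := (n %% p.+1)%N; have rlt : (r < p.+1)%N by apply: ltn_pmod.
have hs : ((p * n) %% p.+1 = if r == 0 then 0 else p.+1 - r)%N.
  have hn := divn_eq n p.+1; set Q := (n %/ p.+1)%N in hn.
  case: eqP => [r0|rn0].
    by rewrite hn -/r r0 addn0 mulnA modnMl.
  rewrite (_ : p * n = (p * Q + r - 1) * p.+1 + (p.+1 - r))%N.
    by rewrite modnMDl modn_small //; lia.
  rewrite hn -/r; nia.
rewrite hs.
have p1 : (p == 1)%N = false by apply/eqP; lia.
have p1' : (1 == p)%N = false by apply/eqP; lia.
have [r0|rn0] := eqVneq r 0%N.
  by rewrite r0 /= eq_sym (gtn_eqF (ltnW hp)) oppr0.
have e1 : (p.+1 - r == 1)%N = (r == p) by apply/eqP/eqP; lia.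
have e2 : (p.+1 - r == p)%N = (r == 1%N) by apply/eqP/eqP; lia.
rewrite e1 e2.
have [r1|r1] := eqVneq r 1%N; first by rewrite r1 p1'.
have [rp|rp] := eqVneq r p; first by rewrite opprK.
by rewrite oppr0.
Qed.

Theorem mainTheorem1 (R : realType) (p : nat) (hp : (1 < p)%N) (lam : R) :
  point_spec p lam <->
  (lam = 0 \/ exists k : nat, lam = (p%:R) ^+ k \/ lam = - (p%:R) ^+ k).
Proof.
split.
  move=> [a [ha [[n0 hn0] heig]]].
  have [c [c0 hc]] := rec_of_calR _ ha.
  have [->|lam0] := eqVneq lam 0; [by left | right].
  pose f := real_complex R.
  have := @hard_closed _ p (fun n => f (a n)) (f lam) (map_poly f c) hp.
  case.
  - by rewrite horner_map fmorph_eq0.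
  - by move=> n; rewrite act_map hc rmorph0.
  - by exists n0; rewrite fmorph_eq0.
  - by rewrite fmorph_eq0.
  - by move=> n; have := heig n; rewrite /U_op => ->; rewrite /f rmorphM.
  move=> L [k [L0 hLk]].
  have e : lam ^+ L = ((p%:R) ^+ k) ^+ L.
    apply: (fmorph_inj f); rewrite !rmorphXn /= hLk rmorph_nat natrX exprAC.
    by [].
  have en : `|lam| = (p%:R) ^+ k.
    apply/eqP; rewrite -(eqrXn2 L0) ?normr_ge0 ?exprn_ge0 ?ler0n //.
    by rewrite -normrX e normrX ger0_norm // exprn_ge0 // ler0n.
  exists k; case: (lerP 0 lam) => h.
    by left; rewrite -en ger0_norm.
  by right; rewrite -en ltr0_norm // opprK.
have p0 : (0 < p)%N by apply: ltnW.
have h1 : (1 %% p.+1 = 1)%N by rewrite modn_small.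
move=> [->|[k [->|->]]].
- pose chi n : R := if (n %% p == 1)%N then 1 else 0.
  exists (fun n => chi n * n%:R ^+ 0); split.
    by apply: calR_chi p0 _ => n; rewrite /chi modnDr.
  split.
    by exists 1%N; rewrite /chi modn_small // eqxx expr0 mul1r oner_eq0.
  by move=> n; rewrite /U_op /chi modnMr /= mul0r mul0r.
- exists (fun n => (fun _ => (1 : R)) n * n%:R ^+ k); split.
    by apply: (calR_chi _ 1%N).
  split; first by exists 1%N; rewrite expr1n mul1r oner_eq0.
  by move=> n; rewrite /U_op !mul1r natrM exprMn.
- exists (fun n => chiN R p n * n%:R ^+ k); split.
    by apply: (calR_chi _ p.+1) => // n; rewrite /chiN modnDr.
  split; first by exists 1%N; rewrite /chiN h1 eqxx expr1n mul1r oner_eq0.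
  move=> n; rewrite /U_op chiN_mul // natrM exprMn.
  by rewrite mulNr mulrCA mulNr.
Qed.
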